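(* The relation $\le_{\mathrm{AC}}$ on promise CSPs (of finite templates) is transitive: if $\mathrm{PCSP}(\mathbf A,\mathbf A')\le_{\mathrm{AC}}\mathrm{PCSP}(\mathbf B,\mathbf B')$ and $\mathrm{PCSP}(\mathbf B,\mathbf B')\le_{\mathrm{AC}}\mathrm{PCSP}(\mathbf C,\mathbf C')$, then $\mathrm{PCSP}(\mathbf A,\mathbf A')\le_{\mathrm{AC}}\mathrm{PCSP}(\mathbf C,\mathbf C')$.
   Context: Structures. A (multisorted relational) signature consists of types and relation symbols, each symbol $R$ having an arity $\mathrm{ar}_R$, a tuple of types. A structure $\mathbf A$ consists of a set $A_t$ per type and relations $R^{\mathbf A}\subseteq A_{\mathrm{ar}_R(1)}\times\dots\times A_{\mathrm{ar}_R(k)}$. A homomorphism is a type-preserving family of maps preserving all relations; write $\mathbf A\to\mathbf B$. For a finite set $X$, $\mathbf B^X$ has domains $B_t^X$ and $(b_1,\dots,b_m)\in R^{\mathbf B^X}$ iff $(b_1(i),\dots,b_m(i))\in R^{\mathbf B}$ for all $i\in X$. Promise CSP. A promise template is a pair $(\mathbf A,\mathbf A')$ of finite structures of the same signature with $\mathbf A\to\mathbf A'$. $\mathrm{PCSP}(\mathbf A,\mathbf A')$: given finite $\mathbf X$, answer yes if $\mathbf X\to\mathbf A$, no if $\mathbf X\not\to\mathbf A'$. A map $\psi$ is a reduction from $\mathrm{PCSP}(\mathbf A,\mathbf A')$ to $\mathrm{PCSP}(\mathbf B,\mathbf B')$ if $\mathbf X\to\mathbf A\Rightarrow\psi(\mathbf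 X)\to\mathbf B$ and $\psi(\mathbf X)\to\mathbf B'\Rightarrow\mathbf X\to\mathbf A'$. Arc-consistency reduction. For a $\Pi$-structure $\mathbf A$ and a $\Sigma$-structure $\mathbf B$, $\kappa_{\mathrm{arc}}^{\mathbf A,\mathbf B}$ maps a $\Pi$-structure $\mathbf X$ to the $\Sigma$-structure constructed as follows: (1) for each $v\in X_t$ set $\mathcal F_v=A_t$; (2) for each constraint $(v_1,\dots,v_k)\in R^{\mathbf X}$ and each $i$, replace $\mathcal F_{v_i}$ by the $i$-th projection of $R^{\mathbf A}\cap(\mathcal F_{v_1}\times\dots\times\mathcal F_{v_k})$; (3) repeat (2) until stable; (4) for each $v$ take a copy of $\mathbf B^{\mathcal F_v}$ with elements $(v;b)$; (5) for each constraint $c=((v_1,\dots,v_k),R)$ take a copy of $\mathbf B^{\mathcal C_c}$ with elements $(c;b)$, where $\mathcal C_c=R^{\mathbf A}\cap(\mathcal F_{v_1}\times\dots\times\mathcal F_{v_k})$; (6) for each such constraint, $i\in[k]$ and $b\colon\mathcal F_{v_i}\to B_s$, identify $(c;b\circ\pi_i)$ with $(v_i;b)$, $\pi_i$ the $i$-th projection; output the quotient by the generated equivalence relation, with relations the images of those of the copies. We write $\mathrm{PCSP}(\mathbf A,\mathbf A')\le_{\mathrm{AC}}\mathrm{PCSP}(\mathbf B,\mathbf B')$ if $\kappa_{\mathrm{arc}}^{\mathbf A,\mathbf B}$ is a reduction between them. *)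

(* Defs.v *)
From Stdlib Require Import List Relations.
Import ListNotations.
Set Implicit Arguments.
Unset Strict Implicit.

Definition finite_type (T : Type) : Prop := exists l : list T, forall x, In x l.

Record signature := Signature {
  sort : Type;
  sym : Type;
  ar : sym -> list sort }.

Definition finite_sig (S : signature) : Prop :=
  finite_type (sort S) /\ finite_type (sym S).

(* A structure: a carrier, each element tagged with its type (so that
   A_t = {x | srt x = t}), and relations given as predicates on tuples. *)
Record structure (S : signature) := Structure {
  carrier : Type;
  srt : carrier -> sort S;
  rel : sym S -> list carrier -> Prop }.

Arguments carrier {S} _.
Arguments srt {S} _ _.
Arguments rel {S} _ _ _.

Definition wf_structure (S : signature) (A : structure S) : Prop :=
  forall R xs, rel A R xs -> map (srt A) xs = ar R.

Definition finite_structure (S : signature) (A : structure S) : Prop :=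
  finite_type (carrier A).

Definition is_hom (S : signature) (A B : structure S)
  (f : carrier A -> carrier B) : Prop :=
  (forall x, srt B (f x) = srt A x) /\
  (forall R xs, rel A R xs -> rel B R (map f xs)).

Arguments is_hom {S} A B f.

Definition hom (S : signature) (A B : structure S) : Prop :=
  exists f, is_hom A B f.

(* The power B^I (I a type of indices): the domain of type s is B_s^I. *)
Definition pow_carrier (S : signature) (B : structure S) (I : Type) : Type :=
  { p : sort S * (I -> carrier B) | forall i, srt B (snd p i) = fst p }.

Definition pow (S : signature) (B : structure S) (I : Type) : structure S :=
  @Structure S (pow_carrier B I)
    (fun p => fst (proj1_sig p))
    (fun R ps => map (fun p => fst (proj1_sig p)) ps = ar R /\
                 forall i, rel B R (map (fun p => snd (proj1_sig p) i) ps)).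

Section Kappa.
Variables (P S : signature) (A : structure P) (B : structure S)
          (X : structure P).

(* Step (1)-(3): arc consistency.  A family F assigns to each v in X a subset
   of A_{t(v)}. *)
Definition family := carrier X -> carrier A -> Prop.

Definition F_init : family := fun v a => srt A a = srt X v.

Definition in_constraint (F : family) (R : sym P) (vs : list (carrier X))
  (as_ : list (carrier A)) : Prop :=
  rel A R as_ /\ Forall2 F vs as_.

Definition ac_step (F : family) : family := fun v a =>
  F v a /\
  forall R vs i, rel X R vs -> nth_error vs i = Some v ->
    exists as_, in_constraint F R vs as_ /\ nth_error as_ i = Some a.

Definition F_ac : family := fun v a => forall n, Nat.iter n ac_step F_init v a.

Definition Fsub (v : carrier X) : Type := { a : carrier A | F_ac v a }.

Definition constraint : Type :=
  { p : sym P * list (carrier X) | rel X (fst p) (snd p) }.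

Definition Csub (c : constraint) : Type :=
  { as_ : list (carrier A) |
      in_constraint F_ac (fst (proj1_sig c)) (snd (proj1_sig c)) as_ }.

(* Steps (4),(5): disjoint union of the copies B^{F_v} and B^{C_c}. *)
Definition pre : Type :=
  ({ v : carrier X & pow_carrier B (Fsub v) } +
   { c : constraint & pow_carrier B (Csub c) })%type.

Definition pre_srt (e : pre) : sort S :=
  match e with
  | inl (existT _ _ p) => fst (proj1_sig p)
  | inr (existT _ _ p) => fst (proj1_sig p)
  end.

(* Step (6): (c; b o pi_i) is identified with (v_i; b).  The equation
   b' = b o pi_i is written pointwise: pi_i maps x in C_c to the element
   of F_{v_i} whose value is the i-th coordinate of x. *)
Definition gen (e1 e2 : pre) : Prop :=
  match e1, e2 with
  | inr (existT _ c p'), inl (existT _ v p) =>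
      fst (proj1_sig p') = fst (proj1_sig p) /\
      exists i, nth_error (snd (proj1_sig c)) i = Some v /\
        forall (x : Csub c) (y : Fsub v),
          nth_error (proj1_sig x) i = Some (proj1_sig y) ->
          snd (proj1_sig p') x = snd (proj1_sig p) y
  | _, _ => False
  end.

Definition pre_equiv : relation pre := clos_refl_sym_trans pre gen.

(* the quotient: equivalence classes, tagged with their (common) type *)
Definition kappa_carrier : Type :=
  { q : sort S * (pre -> Prop) |
      exists e, pre_srt e = fst q /\ snd q = pre_equiv e }.

Definition cls (e : pre) : kappa_carrier :=
  exist _ (pre_srt e, pre_equiv e) (ex_intro _ e (conj eq_refl eq_refl)).

Definition copy_rel (R : sym S) (es : list pre) : Prop :=
  (exists v (ps : list (pow_carrier B (Fsub v))),
      rel (pow B (Fsub v)) R ps /\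
      es = map (fun p => inl (existT _ v p)) ps) \/
  (exists c (ps : list (pow_carrier B (Csub c))),
      rel (pow B (Csub c)) R ps /\
      es = map (fun p => inr (existT _ c p)) ps).

Definition kappa_arc : structure S :=
  @Structure S kappa_carrier
    (fun q => fst (proj1_sig q))
    (fun R qs => exists es, copy_rel R es /\ qs = map cls es).

End Kappa.

Definition ac_reduces (P S : signature) (A A' : structure P)
  (B B' : structure S) : Prop :=
  forall X : structure P, wf_structure X -> finite_structure X ->
    (hom X A -> hom (kappa_arc A B X) B) /\
    (hom (kappa_arc A B X) B' -> hom X A').

Definition promise_template (P : signature) (A A' : structure P) : Prop :=
  finite_sig P /\ wf_structure A /\ wf_structure A' /\
  finite_structure A /\ finite_structure A' /\ hom A A'.

(* Main.v *)
Require Import Defs.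
From Stdlib Require Import List Relations Classical ClassicalEpsilon FunctionalExtensionality ProofIrrelevance PropExtensionality Lia.
Import ListNotations.
Set Implicit Arguments.

Fixpoint lists {U : Type} (l : list U) (n : nat) : list (list U) :=
  match n with
  | 0 => [[]]
  | S n => flat_map (fun a => map (cons a) (lists l n)) l
  end.

Lemma in_lists U (l : list U) : (forall x, In x l) -> forall t, In t (lists l (length t)).
Proof.
  intros Hl t; induction t as [|a t IH]; simpl; auto.
  apply in_flat_map. exists a; split; auto. apply in_map; auto.
Qed.

Lemma fin_sub (T : Type) (Pr : T -> Prop) (l : list T) :
  (forall x, Pr x -> In x l) -> finite_type {x | Pr x}.
Proof.
  intros Hl.
  exists (flat_map (fun x => match excluded_middle_informative (Pr x) with
                             | left h => [exist Pr x h] | right _ => [] end) l).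
  intros [x h]. apply in_flat_map. exists x. split; [apply Hl; auto|].
  destruct (excluded_middle_informative (Pr x)) as [h'|n].
  - rewrite (proof_irrelevance _ h h'). simpl; auto.
  - contradiction.
Qed.

Lemma fin_prod (U V : Type) : finite_type U -> finite_type V -> finite_type (U * V).
Proof.
  intros [lu Hu] [lv Hv]. exists (list_prod lu lv). intros [u v].
  apply in_prod; auto.
Qed.

Lemma fin_sum (U V : Type) : finite_type U -> finite_type V -> finite_type (U + V).
Proof.
  intros [lu Hu] [lv Hv]. exists (map inl lu ++ map inr lv). intros [u|v];
  apply in_or_app; [left|right]; apply in_map; auto.
Qed.

Lemma fin_sigT (I : Type) (F : I -> Type) :
  finite_type I -> (forall i, finite_type (F i)) -> finite_type {i : I & F i}.
Proof.
  intros [li Hi] HF.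
  assert (H : forall l : list I, exists L, forall i, In i l -> forall x, In (existT F i x) L).
  { induction l as [|i l [L HL]].
    - exists []. intros i [].
    - destruct (HF i) as [lx Hx]. exists (map (existT F i) lx ++ L).
      intros j [<-|Hj] x; apply in_or_app; [left; apply in_map; auto| right; auto]. }
  destruct (H li) as [L HL]. exists L. intros [i x]. apply HL; auto.
Qed.

Lemma fin_fun (I J : Type) : finite_type I -> finite_type J -> finite_type (I -> J).
Proof.
  intros [li Hi] [lj Hlj].
  assert (H : forall l : list I, exists L : list (I -> J), forall f, exists g, In g L /\ forall i, In i l -> g i = f i).
  { induction l as [|i l [L HL]].
    - destruct (classic (inhabited (I -> J))) as [[f0]|n].
      + exists [f0]. intros f. exists f0. split; simpl; auto. intros _ [].
      + exists []. intros f. exfalso. apply n. constructor. exact f.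
    - exists (flat_map (fun g => map (fun b => fun j => if excluded_middle_informative (j = i) then b else g j) lj) L).
      intros f. destruct (HL f) as [g [Hg Hgf]].
      exists (fun j => if excluded_middle_informative (j = i) then f i else g j). split.
      + apply in_flat_map. exists g. split; auto. apply in_map_iff. exists (f i); auto.
      + intros j Hj. destruct (excluded_middle_informative (j = i)) as [->|n]; auto.
        apply Hgf. destruct Hj; [congruence|auto]. }
  destruct (H li) as [L HL]. exists L. intros f. destruct (HL f) as [g [Hg Hgf]].
  replace f with g; auto. apply functional_extensionality. intros; apply Hgf; auto.
Qed.

Lemma fin_image (U V : Type) (f : U -> V) : finite_type U -> (forall v, exists u, v = f u) -> finite_type V.
Proof.
  intros [lu Hu] Hs. exists (map f lu). intros v. destruct (Hs v) as [u ->]. apply in_map; auto.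
Qed.

Lemma pigeon (U : Type) (L : list U) (Pn : nat -> U -> Prop) :
  (forall n m, n <= m -> forall t, Pn m t -> Pn n t) ->
  (forall n, exists t, In t L /\ Pn n t) -> exists t, In t L /\ forall n, Pn n t.
Proof.
  intros Hmon. induction L as [|t L IH]; intros H.
  - destruct (H 0) as [t [[] _]].
  - destruct (classic (forall n, Pn n t)) as [Ht|Ht].
    + exists t; simpl; auto.
    + apply not_all_ex_not in Ht. destruct Ht as [N HN].
      destruct IH as [t' [Ht' Hall]].
      * intros n. destruct (H (max n N)) as [t' [[<-|Hin] Hp]].
        -- exfalso. apply HN. eapply Hmon; [|exact Hp]. lia.
        -- exists t'. split; auto. eapply Hmon; [|exact Hp]. lia.
      * exists t'. simpl; auto.
Qed.

Lemma Forall2_all (U V : Type) (R : nat -> U -> V -> Prop) l1 l2 :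
  (forall n, Forall2 (R n) l1 l2) -> Forall2 (fun x y => forall n, R n x y) l1 l2.
Proof.
  revert l2; induction l1 as [|x l1 IH]; intros [|y l2] H.
  - constructor.
  - specialize (H 0). inversion H.
  - specialize (H 0). inversion H.
  - constructor.
    + intros n. specialize (H n). inversion H; auto.
    + apply IH. intros n. specialize (H n). inversion H; auto.
Qed.

Lemma Forall2_map_same (U V W : Type) (R : V -> W -> Prop) (f : U -> V) (g : U -> W) l :
  (forall x, In x l -> R (f x) (g x)) -> Forall2 R (map f l) (map g l).
Proof.
  induction l; simpl; intros H; constructor; auto.
Qed.

Lemma Forall2_nth (U V : Type) (R : U -> V -> Prop) l1 l2 i x :
  Forall2 R l1 l2 -> nth_error l1 i = Some x -> exists y, nth_error l2 i = Some y /\ R x y.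
Proof.
  intros H; revert i; induction H; intros [|i] Hi; simpl in *; try discriminate.
  - inversion Hi; subst; eauto.
  - eauto.
Qed.

Lemma nth_error_map_inv (U V : Type) (f : U -> V) l i y :
  nth_error (map f l) i = Some y -> exists x, nth_error l i = Some x /\ y = f x.
Proof.
  rewrite nth_error_map. destruct (nth_error l i); simpl; intros H; inversion H; eauto.
Qed.

Lemma sig_pi (T : Type) (Q : T -> Prop) (U : Type) (g : {x | Q x} -> U) x y h1 h2 :
  x = y -> g (exist Q x h1) = g (exist Q y h2).
Proof. intros ->. rewrite (proof_irrelevance _ h1 h2). auto. Qed.

Lemma hom_comp (S : signature) (A B C : structure S) : hom A B -> hom B C -> hom A C.
Proof.
  intros [f [Hf1 Hf2]] [g [Hg1 Hg2]]. exists (fun x => g (f x)). split.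
  - intros x. rewrite Hg1, Hf1; auto.
  - intros R xs H. rewrite <- map_map. auto.
Qed.

Lemma Forall2_map_r (U W : Type) (R : U -> W -> Prop) (g : U -> W) l :
  (forall x, In x l -> R x (g x)) -> Forall2 R l (map g l).
Proof.
  induction l; simpl; intros H; constructor; auto.
Qed.

Section Quot.
Variables (P S : signature) (A : structure P) (B : structure S) (X : structure P).

Lemma gen_srt (e1 e2 : pre A B X) : gen e1 e2 -> pre_srt e1 = pre_srt e2.
Proof.
  destruct e1 as [[v p]|[c p]]; destruct e2 as [[v' p']|[c' p']]; simpl; tauto.
Qed.

Lemma equiv_srt (e1 e2 : pre A B X) : pre_equiv e1 e2 -> pre_srt e1 = pre_srt e2.
Proof.
  induction 1; auto. apply gen_srt; auto. congruence.
Qed.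

Lemma equiv_refl (e : pre A B X) : pre_equiv e e.
Proof. apply rst_refl. Qed.

Lemma equiv_cls (e1 e2 : pre A B X) : pre_equiv e1 e2 -> cls e1 = cls e2.
Proof.
  intros H. unfold cls.
  assert (E : pre_equiv e1 = pre_equiv e2).
  { apply functional_extensionality; intros e. apply propositional_extensionality. split; intros H'.
    - eapply rst_trans; [apply rst_sym; exact H|exact H'].
    - eapply rst_trans; [exact H|exact H']. }
  generalize (ex_intro (fun e : pre A B X => pre_srt e = fst (pre_srt e1, pre_equiv e1) /\
          snd (pre_srt e1, pre_equiv e1) = pre_equiv e) e1 (conj eq_refl eq_refl)).
  generalize (ex_intro (fun e : pre A B X => pre_srt e = fst (pre_srt e2, pre_equiv e2) /\
          snd (pre_srt e2, pre_equiv e2) = pre_equiv e) e2 (conj eq_refl eq_refl)).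
  rewrite (equiv_srt H), E. intros h1 h2. rewrite (proof_irrelevance _ h1 h2). auto.
Qed.

Lemma cls_equiv (e1 e2 : pre A B X) : cls e1 = cls e2 -> pre_equiv e1 e2.
Proof.
  intros H. apply (f_equal (fun q => snd (proj1_sig q))) in H. simpl in H.
  rewrite H. apply equiv_refl.
Qed.

Definition rep (q : kappa_carrier A B X) : pre A B X :=
  proj1_sig (constructive_indefinite_description _ (proj2_sig q)).

Lemma rep_spec q : cls (rep q) = q.
Proof.
  unfold rep. destruct (constructive_indefinite_description _ (proj2_sig q)) as [e [H1 H2]].
  simpl. destruct q as [[s Pr] h]. simpl in *. subst. unfold cls.
  f_equal. apply proof_irrelevance.
Qed.

Lemma cls_surj (q : kappa_carrier A B X) : exists e, q = cls e.
Proof. exists (rep q). symmetry; apply rep_spec. Qed.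

Definition lift (U : Type) (ev : pre A B X -> U) (q : kappa_carrier A B X) : U := ev (rep q).

Lemma lift_cls U (ev : pre A B X -> U) :
  (forall e1 e2, pre_equiv e1 e2 -> ev e1 = ev e2) -> forall e, lift ev (cls e) = ev e.
Proof.
  intros Hinv e. unfold lift. apply Hinv. apply cls_equiv. apply rep_spec.
Qed.

Lemma srt_cls e : srt (kappa_arc A B X) (cls e) = pre_srt e.
Proof. reflexivity. Qed.

Lemma ac_step_sub (F : family A X) v a : ac_step F v a -> F v a.
Proof. intros [H _]; auto. Qed.

Lemma iter_mon n m v a : n <= m -> Nat.iter m (@ac_step P A X) (@F_init P A X) v a ->
  Nat.iter n (@ac_step P A X) (@F_init P A X) v a.
Proof.
  induction 1; auto. intros H0. apply IHle. simpl in H0. apply ac_step_sub; auto.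
Qed.

Lemma F_ac_fix : finite_structure A -> forall v a R vs i,
  @F_ac P A X v a -> rel X R vs -> nth_error vs i = Some v ->
  exists t, in_constraint (@F_ac P A X) R vs t /\ nth_error t i = Some a.
Proof.
  intros [lA HA] v a R vs i Hva HR Hi.
  destruct (@pigeon _ (lists lA (length vs))
    (fun n t => rel A R t /\ Forall2 (Nat.iter n (@ac_step P A X) (@F_init P A X)) vs t /\ nth_error t i = Some a))
    as [t [_ Ht]].
  - intros n m Hnm t [H1 [H2 H3]]. split; auto. split; auto.
    eapply Forall2_impl; [|exact H2]. intros; eapply iter_mon; eauto.
  - intros n. destruct (Hva (Datatypes.S n)) as [_ H]. destruct (H R vs i HR Hi) as [t [[H1 H2] H3]].
    exists t. split; auto. rewrite (Forall2_length H2). apply in_lists; auto.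
  - exists t. split; [split|].
    + apply (Ht 0).
    + apply Forall2_all. intros n; apply (Ht n).
    + apply (Ht 0).
Qed.

Lemma hom_F_ac (h : carrier X -> carrier A) : is_hom X A h -> forall v, @F_ac P A X v (h v).
Proof.
  intros [H1 H2] v n. revert v. induction n; intros v.
  - simpl. unfold F_init. apply H1.
  - simpl. split; [apply IHn|]. intros R vs i HR Hi. exists (map h vs). split; [split|].
    + apply H2; auto.
    + apply Forall2_map_r. intros; apply IHn.
    + rewrite nth_error_map, Hi; auto.
Qed.

Section Complete.
Variables (h : carrier X -> carrier A) (Hh : is_hom X A h).

Lemma hom_Csub (c : constraint X) : in_constraint (@F_ac P A X) (fst (proj1_sig c)) (snd (proj1_sig c)) (map h (snd (proj1_sig c))).
Proof.
  destruct c as [[R vs] HR]; simpl. split.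
  - apply Hh; auto.
  - apply Forall2_map_r. intros; apply hom_F_ac; auto.
Qed.

Definition ev (e : pre A B X) : carrier B :=
  match e with
  | inl (existT _ v p) => snd (proj1_sig p) (exist _ (h v) (hom_F_ac Hh v))
  | inr (existT _ c p) => snd (proj1_sig p) (exist _ (map h (snd (proj1_sig c))) (hom_Csub c))
  end.

Lemma ev_inv e1 e2 : pre_equiv e1 e2 -> ev e1 = ev e2.
Proof.
  induction 1; auto; try congruence.
  destruct x as [[v p]|[c p]]; destruct y as [[v' p']|[c' p']]; simpl in *; try tauto.
  destruct H as [_ [i [Hi Hx]]]. apply Hx. simpl. rewrite nth_error_map, Hi; auto.
Qed.

Lemma complete_hom : hom (kappa_arc A B X) B.
Proof.
  exists (lift ev). split.
  - intros q. destruct (cls_surj q) as [e ->]. rewrite (@lift_cls _ ev ev_inv). rewrite srt_cls.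
    destruct e as [[v p]|[c p]]; simpl; apply (proj2_sig p).
  - intros R qs [es [Hes ->]]. rewrite map_map.
    rewrite (map_ext _ _ (@lift_cls _ ev ev_inv)).
    destruct Hes as [[v [ps [[_ Hps] ->]]]|[c [ps [[_ Hps] ->]]]]; rewrite map_map; simpl.
    + apply Hps.
    + apply Hps.
Qed.
End Complete.

End Quot.

Lemma complete_gen (P S : signature) (A : structure P) (B : structure S) (X : structure P) :
  hom X A -> hom (kappa_arc A B X) B.
Proof. intros [h Hh]. exact (@complete_hom P S A B X h Hh). Qed.

Definition precomp (T : signature) (C : structure T) (I J : Type) (g : pow_carrier C J) (k : I -> J) : pow_carrier C I :=
  exist (fun p : sort T * (I -> carrier C) => forall i, srt C (snd p i) = fst p)
    (fst (proj1_sig g), fun i => snd (proj1_sig g) (k i)) (fun i => proj2_sig g (k i)).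

Lemma pow_eq (T : signature) (C : structure T) (I : Type) (p1 p2 : pow_carrier C I) :
  fst (proj1_sig p1) = fst (proj1_sig p2) -> (forall i, snd (proj1_sig p1) i = snd (proj1_sig p2) i) -> p1 = p2.
Proof.
  destruct p1 as [[s1 f1] h1], p2 as [[s2 f2] h2]; simpl. intros -> Hf.
  assert (f1 = f2) by (apply functional_extensionality; auto). subst.
  f_equal. apply proof_irrelevance.
Qed.

Lemma pow_rel_precomp (T : signature) (C : structure T) (I J : Type) R (gs : list (pow_carrier C J)) :
  rel (pow C J) R gs -> forall k : I -> J, rel (pow C I) R (map (fun g => precomp g k) gs).
Proof.
  intros [H1 H2] k. split; simpl; rewrite ?map_map; simpl.
  - exact H1.
  - intros i. rewrite map_map. apply (H2 (k i)).
Qed.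

Section Psi.
Variables (P S T : signature) (A : structure P) (B : structure S) (C : structure T) (X : structure P).
Hypothesis finA : finite_structure A.

Notation Y := (kappa_arc A B X).
Notation G := (@F_ac S B Y).
Notation FA := (@F_ac P A X).

Definition values (e : pre A B X) (b : carrier B) : Prop :=
  match e with
  | inl (existT _ v p) => exists a, snd (proj1_sig p) a = b
  | inr (existT _ c p) => exists x, snd (proj1_sig p) x = b
  end.

Lemma values_gen e1 e2 b : gen e1 e2 -> (values e1 b <-> values e2 b).
Proof.
  destruct e1 as [[v p]|[c p]]; destruct e2 as [[v' p']|[c' p']]; simpl; try tauto.
  intros [_ [i [Hi Hx]]]. split.
  - intros [x <-]. destruct x as [t Ht]. destruct Ht as [Hr Hf].
    destruct (@Forall2_nth _ _ _ _ _ _ _ Hf Hi) as [a [Ha Hva]].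
    exists (exist _ a Hva). symmetry. apply Hx. simpl. exact Ha.
  - intros [[a Ha] <-].
    destruct c as [[R vs] HR]; simpl in *.
    destruct (F_ac_fix finA R vs i Ha HR Hi) as [t [Ht Hta]].
    exists (exist _ t Ht). apply Hx. simpl. exact Hta.
Qed.

Lemma values_equiv e1 e2 : pre_equiv e1 e2 -> forall b, values e1 b <-> values e2 b.
Proof.
  induction 1; intros b.
  - apply values_gen; auto.
  - tauto.
  - rewrite IHclos_refl_sym_trans; tauto.
  - rewrite IHclos_refl_sym_trans1; auto.
Qed.

Lemma Gp_sub : forall n y b, (exists e, cls e = y /\ values e b) ->
  Nat.iter n (@ac_step S B Y) (@F_init S B Y) y b.
Proof.
  induction n; intros y b [e [<- Hv]].
  - simpl. unfold F_init. rewrite srt_cls.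
    destruct e as [[v p]|[c p]]; simpl in *; destruct Hv as [a <-]; apply (proj2_sig p).
  - simpl. split; [apply IHn; eauto|].
    intros R ys j [es [Hes ->]] Hj.
    destruct (nth_error_map_inv _ _ _ Hj) as [e' [He' Hce]].
    assert (Hv' : values e' b) by (apply (values_equiv (cls_equiv Hce)); auto).
    destruct Hes as [[v [ps [Hps ->]]]|[c [ps [Hps ->]]]].
    + destruct (nth_error_map_inv _ _ _ He') as [pj [Hpj ->]].
      destruct Hv' as [a <-].
      exists (map (fun p => snd (proj1_sig p) a) ps). split; [split|].
      * apply (proj2 Hps).
      * rewrite map_map. apply Forall2_map_same. intros p _. apply IHn.
        exists (inl (existT _ v p)). split; auto. simpl; eauto.
      * rewrite nth_error_map. unfold pow_carrier in Hpj. rewrite Hpj. reflexivity.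
    + destruct (nth_error_map_inv _ _ _ He') as [pj [Hpj ->]].
      destruct Hv' as [a <-].
      exists (map (fun p => snd (proj1_sig p) a) ps). split; [split|].
      * apply (proj2 Hps).
      * rewrite map_map. apply Forall2_map_same. intros p _. apply IHn.
        exists (inr (existT _ c p)). split; auto. simpl; eauto.
      * rewrite nth_error_map. unfold pow_carrier in Hpj. rewrite Hpj. reflexivity.
Qed.

Lemma G_values e b : values e b -> G (cls e) b.
Proof. intros H n. apply Gp_sub. eauto. Qed.

Definition target (y : carrier Y) (g : pow_carrier C (Fsub B y)) (e : pre A B X)
  (H : forall b, values e b -> G y b) : pre A C X :=
  match e as e0 return (forall b, values e0 b -> G y b) -> pre A C X with
  | inl (existT _ v p) => fun H =>
      inl (existT _ v (precomp g (fun a => exist _ (snd (proj1_sig p) a) (H _ (ex_intro _ a eq_refl)))))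
  | inr (existT _ c p) => fun H =>
      inr (existT _ c (precomp g (fun x => exist _ (snd (proj1_sig p) x) (H _ (ex_intro _ x eq_refl)))))
  end H.

Lemma target_equiv y g e1 e2 : pre_equiv e1 e2 -> forall H1 H2,
  pre_equiv (@target y g e1 H1) (@target y g e2 H2).
Proof.
  induction 1; intros H1 H2.
  - apply rst_step.
    destruct x as [[v p]|[c p]]; destruct y0 as [[v' p']|[c' p']]; simpl in *; try tauto.
    destruct H as [_ [i [Hi Hx]]]. split; auto. exists i. split; auto.
    intros x0 y1 Hxy. apply sig_pi. apply Hx. auto.
  - rewrite (proof_irrelevance _ H1 H2). apply rst_refl.
  - apply rst_sym. apply IHclos_refl_sym_trans.
  - assert (H3 : forall b, values y0 b -> G y b).
    { intros b Hb. apply H1. apply (values_equiv H). auto. }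
    eapply rst_trans; [apply (IHclos_refl_sym_trans1 H1 H3)|apply IHclos_refl_sym_trans2].
Qed.

Lemma target_shape y e H :
  (exists v (k : Fsub A v -> Fsub B y), forall g, @target y g e H = inl (existT _ v (precomp g k))) \/
  (exists c (k : Csub A c -> Fsub B y), forall g, @target y g e H = inr (existT _ c (precomp g k))).
Proof.
  destruct e as [[v p]|[c p]]; [left|right]; eexists; eexists; intros g; reflexivity.
Qed.

Lemma good_rep (y : carrier Y) : forall b, values (rep y) b -> G y b.
Proof. intros b Hb. rewrite <- (rep_spec y). apply G_values; auto. Qed.

Definition Decomp (R : sym S) (ys : list (carrier Y)) : Type :=
 ({ v : carrier X & { ps : list (pow_carrier B (Fsub A v)) |
     rel (pow B (Fsub A v)) R ps /\ ys = map (fun p => cls (inl (existT _ v p))) ps } } +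
  { c : constraint X & { ps : list (pow_carrier B (Csub A c)) |
     rel (pow B (Csub A c)) R ps /\ ys = map (fun p => cls (inr (existT _ c p))) ps } })%type.

Definition decomp (R : sym S) (ys : list (carrier Y)) (H : rel Y R ys) : Decomp R ys.
Proof.
  destruct (excluded_middle_informative (exists v (ps : list (pow_carrier B (Fsub A v))),
     rel (pow B (Fsub A v)) R ps /\ ys = map (fun p => cls (inl (existT _ v p))) ps)) as [h|h].
  - left. apply constructive_indefinite_description in h. destruct h as [v h].
    apply constructive_indefinite_description in h. exact (existT _ v h).
  - right.
    assert (h' : exists c (ps : list (pow_carrier B (Csub A c))),
     rel (pow B (Csub A c)) R ps /\ ys = map (fun p => cls (inr (existT _ c p))) ps).
    { destruct H as [es [[[v [ps [Hr ->]]]|[c [ps [Hr ->]]]] ->]].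
      - exfalso. apply h. exists v, ps. split; auto. rewrite map_map. auto.
      - exists c, ps. split; auto. rewrite map_map. auto. }
    apply constructive_indefinite_description in h'. destruct h' as [c h'].
    apply constructive_indefinite_description in h'. exact (existT _ c h').
Defined.

Lemma HD_v R ys v (ps : list (pow_carrier B (Fsub A v))) :
  rel (pow B (Fsub A v)) R ps -> ys = map (fun p => cls (inl (existT _ v p))) ps ->
  forall a, in_constraint G R ys (map (fun p => snd (proj1_sig p) a) ps).
Proof.
  intros Hr -> a. split.
  - apply (proj2 Hr).
  - apply Forall2_map_same. intros p _. apply G_values. simpl; eauto.
Qed.

Lemma HD_c R ys c (ps : list (pow_carrier B (Csub A c))) :
  rel (pow B (Csub A c)) R ps -> ys = map (fun p => cls (inr (existT _ c p))) ps ->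
  forall a, in_constraint G R ys (map (fun p => snd (proj1_sig p) a) ps).
Proof.
  intros Hr -> a. split.
  - apply (proj2 Hr).
  - apply Forall2_map_same. intros p _. apply G_values. simpl; eauto.
Qed.

Definition psi0 (e : pre B C Y) : pre A C X :=
  match e with
  | inl (existT _ y g) => @target y g (rep y) (@good_rep y)
  | inr (existT _ d g) =>
      match decomp (proj2_sig d) with
      | inl (existT _ v (exist _ ps Hps)) =>
          inl (existT _ v (precomp g (fun a => exist _ (map (fun p => snd (proj1_sig p) a) ps)
                 (HD_v (proj1 Hps) (proj2 Hps) a))))
      | inr (existT _ c (exist _ ps Hps)) =>
          inr (existT _ c (precomp g (fun a => exist _ (map (fun p => snd (proj1_sig p) a) ps)
                 (HD_c (proj1 Hps) (proj2 Hps) a))))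
      end
  end.


Lemma psi0_inl_shape (y : carrier Y) :
  (exists v (k : Fsub A v -> Fsub B y), forall g, psi0 (inl (existT _ y g)) = inl (existT _ v (precomp g k))) \/
  (exists c (k : Csub A c -> Fsub B y), forall g, psi0 (inl (existT _ y g)) = inr (existT _ c (precomp g k))).
Proof. simpl. apply target_shape. Qed.

Lemma psi0_inr_shape (d : constraint Y) :
  (exists v (k : Fsub A v -> Csub B d), forall g, psi0 (inr (existT _ d g)) = inl (existT _ v (precomp g k))) \/
  (exists c (k : Csub A c -> Csub B d), forall g, psi0 (inr (existT _ d g)) = inr (existT _ c (precomp g k))).
Proof.
  simpl. match goal with |- context [@decomp ?a ?b ?h] => destruct (@decomp a b h) as [[v [ps Hps]]|[c [ps Hps]]] end;
  [left|right]; eexists; eexists; intros g; reflexivity.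
Qed.

Lemma psi0_srt e : pre_srt (psi0 e) = pre_srt e.
Proof.
  destruct e as [[y g]|[d g]].
  - destruct (psi0_inl_shape y) as [[v [k Hk]]|[c [k Hk]]]; rewrite Hk; reflexivity.
  - destruct (psi0_inr_shape d) as [[v [k Hk]]|[c [k Hk]]]; rewrite Hk; reflexivity.
Qed.

Lemma psi0_equiv e1 e2 : pre_equiv e1 e2 -> pre_equiv (psi0 e1) (psi0 e2).
Proof.
  induction 1.
  - destruct x as [[y1 g1]|[d g']]; destruct y as [[y g]|[d' g2]]; simpl in H; try tauto.
    destruct H as [Hfst [j [Hj Hx]]].
    simpl psi0. destruct d as [[R ys] HR]. simpl in *.
    match goal with |- context [@decomp ?a ?b ?h] => destruct (@decomp a b h) as [[v [ps [Hr Hys]]]|[c [ps [Hr Hys]]]] end; simpl.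
    + subst ys. destruct (nth_error_map_inv _ _ _ Hj) as [pj [Hpj Hy]].
      assert (Hg : forall b, values (inl (existT _ v pj)) b -> G y b).
      { intros b Hb. rewrite Hy. apply G_values; auto. }
      apply rst_sym. eapply rst_trans.
      { apply (@target_equiv y g (rep y) (inl (existT _ v pj)) ltac:(apply cls_equiv; rewrite rep_spec; exact Hy) (@good_rep y) Hg). }
      simpl. match goal with |- clos_refl_sym_trans _ _ (inl (existT _ _ ?a)) (inl (existT _ _ ?b)) => replace a with b end.
      { apply rst_refl. }
      apply pow_eq; simpl; auto. intros a. apply Hx. simpl.
      rewrite nth_error_map. unfold pow_carrier in Hpj. rewrite Hpj. reflexivity.
    + subst ys. destruct (nth_error_map_inv _ _ _ Hj) as [pj [Hpj Hy]].
      assert (Hg : forall b, values (inr (existT _ c pj)) b -> G y b).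
      { intros b Hb. rewrite Hy. apply G_values; auto. }
      apply rst_sym. eapply rst_trans.
      { apply (@target_equiv y g (rep y) (inr (existT _ c pj)) ltac:(apply cls_equiv; rewrite rep_spec; exact Hy) (@good_rep y) Hg). }
      simpl. match goal with |- clos_refl_sym_trans _ _ (inr (existT _ _ ?a)) (inr (existT _ _ ?b)) => replace a with b end.
      { apply rst_refl. }
      apply pow_eq; simpl; auto. intros a. apply Hx. simpl.
      rewrite nth_error_map. unfold pow_carrier in Hpj. rewrite Hpj. reflexivity.
  - apply rst_refl.
  - apply rst_sym; auto.
  - eapply rst_trans; eauto.
Qed.

Definition Psi : carrier (kappa_arc B C Y) -> carrier (kappa_arc A C X) :=
  lift (fun e => cls (psi0 e)).

Lemma Psi_cls e : Psi (cls e) = cls (psi0 e).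
Proof.
  unfold Psi. apply (@lift_cls _ _ _ _ _ _ (fun e => cls (psi0 e))).
  intros e1 e2 H. apply equiv_cls. apply psi0_equiv; auto.
Qed.

Lemma Psi_hom : is_hom (kappa_arc B C Y) (kappa_arc A C X) Psi.
Proof.
  split.
  - intros q. destruct (cls_surj q) as [e ->]. rewrite Psi_cls, !srt_cls. apply psi0_srt.
  - intros R qs [es [Hes ->]]. exists (map psi0 es). split.
    2: { rewrite !map_map. apply map_ext. intros; apply Psi_cls. }
    destruct Hes as [[y [gs [Hgs ->]]]|[d [gs [Hgs ->]]]]; rewrite map_map.
    + destruct (psi0_inl_shape y) as [[v [k Hk]]|[c [k Hk]]].
      * left. exists v, (map (fun g => precomp g k) gs). split.
        { apply pow_rel_precomp; auto. }
        rewrite map_map. apply map_ext. intros; apply Hk.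
      * right. exists c, (map (fun g => precomp g k) gs). split.
        { apply pow_rel_precomp; auto. }
        rewrite map_map. apply map_ext. intros; apply Hk.
    + destruct (psi0_inr_shape d) as [[v [k Hk]]|[c [k Hk]]].
      * left. exists v, (map (fun g => precomp g k) gs). split.
        { apply pow_rel_precomp; auto. }
        rewrite map_map. apply map_ext. intros; apply Hk.
      * right. exists c, (map (fun g => precomp g k) gs). split.
        { apply pow_rel_precomp; auto. }
        rewrite map_map. apply map_ext. intros; apply Hk.
Qed.

End Psi.

Lemma fin_sub' (T : Type) (Pr : T -> Prop) : finite_type T -> finite_type {x | Pr x}.
Proof. intros [l Hl]. apply (@fin_sub _ _ (l)). auto. Qed.

Lemma pow_fin (S : signature) (B : structure S) (I : Type) :
  finite_type (sort S) -> finite_type (carrier B) -> finite_type I -> finite_type (pow_carrier B I).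
Proof.
  intros HS HB HI. unfold pow_carrier. apply fin_sub'. apply fin_prod; auto. apply fin_fun; auto.
Qed.

Section Fin.
Variables (P S : signature) (A : structure P) (B : structure S) (X : structure P).

Lemma Y_wf : wf_structure (kappa_arc A B X).
Proof.
  intros R qs [es [Hes ->]]. rewrite map_map.
  destruct Hes as [[v [ps [[H1 _] ->]]]|[c [ps [[H1 _] ->]]]]; rewrite map_map; exact H1.
Qed.

Lemma Y_fin : finite_sig P -> finite_type (sort S) -> finite_structure A -> finite_type (carrier B) ->
  finite_structure X -> wf_structure X -> finite_structure (kappa_arc A B X).
Proof.
  intros [_ [lsym Hsym]] HS HA HB HX wfX.
  unfold finite_structure. simpl.
  apply (@fin_image _ _ (@cls P S A B X)); [|intros q; apply cls_surj].
  unfold pre. apply fin_sum; apply fin_sigT.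
  - exact HX.
  - intros v. apply pow_fin; auto. apply fin_sub'. exact HA.
  - destruct HX as [lX HlX].
    apply (@fin_sub _ _ (flat_map (fun R => map (pair R) (lists lX (length (ar R)))) lsym)).
    intros [R vs] H. simpl in H. apply in_flat_map. exists R. split; auto. apply in_map.
    rewrite <- (wfX R vs H), length_map. apply in_lists; auto.
  - intros c. apply pow_fin; auto. destruct HA as [lA HlA].
    apply (@fin_sub _ _ (lists lA (length (snd (proj1_sig c))))).
    intros t [_ Ht]. rewrite (Forall2_length Ht). apply in_lists; auto.
Qed.
End Fin.

Theorem mainTheorem15 (P S T : signature)
  (A A' : structure P) (B B' : structure S) (C C' : structure T) :
  promise_template A A' -> promise_template B B' -> promise_template C C' ->
  ac_reduces A A' B B' -> ac_reduces B B' C C' ->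
  ac_reduces A A' C C'.
Proof.
  intros [finP [_ [_ [finA _]]]] [[finS _] [_ [_ [finB _]]]] _ HAB HBC.
  intros X wfX finX. split.
  - apply complete_gen.
  - intros Hk. apply (proj2 (HAB X wfX finX)).
    apply (proj2 (HBC (kappa_arc A B X) (@Y_wf _ _ A B X) (@Y_fin P S A B X finP finS finA finB finX wfX))).
    eapply hom_comp; [|exact Hk].
    exists (@Psi P S T A B C X finA). apply Psi_hom.
Qed.
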